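(* Let $K$ be a field of characteristic zero, $R=K[X_1,\ldots,X_n]$, $R_{n-1}=K[X_1,\ldots,X_{n-1}]$. Let $P$ be a prime ideal of $R$ and $I$ an ideal of $R$ with $\sqrt I=P$. If $\partial_n(I)\subseteq I$ (where $\partial_n=\partial/\partial X_n$), then $P=(P\cap R_{n-1})R$. *)

(* Defs.v *)
From mathcomp Require Import all_boot all_algebra.
From mathcomp Require Import mpoly.
Set Implicit Arguments. Unset Strict Implicit. Unset Printing Implicit Defensive.
Import GRing.Theory.
Local Open Scope ring_scope.

Definition is_ideal (R : comRingType) (I : pred R) : Prop :=
  [/\ 0 \in I,
      (forall a b, a \in I -> b \in I -> a + b \in I) &
      (forall r a, a \in I -> r * a \in I)].

Definition is_prime_ideal (R : comRingType) (P : pred R) : Prop :=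
  [/\ is_ideal P, 1 \notin P &
      forall a b, a * b \in P -> a \in P \/ b \in P].

Definition radical_eq (R : comRingType) (I P : pred R) : Prop :=
  forall f, (exists k : nat, f ^+ k \in I) <-> f \in P.

(* p lies in the subring K[X_j : j <> i], i.e. no monomial of p involves X_i. *)
Definition free_of_var (K : fieldType) (n : nat) (i : 'I_n)
  (p : {mpoly K[n]}) : Prop :=
  forall m, m \in msupp p -> m i = 0%N.

Definition in_generated_ideal (R : comRingType) (J : R -> Prop) (f : R) : Prop :=
  exists s : seq (R * R), (forall x, x \in s -> J x.2) /\
    f = \sum_(x <- s) x.1 * x.2.

(* Main.v *)
Require Import Defs.
From mathcomp Require Import all_boot all_algebra.
From mathcomp Require Import mpoly.
From mathcomp Require Import ring zify.
Set Implicit Arguments. Unset Strict Implicit. Unset Printing Implicit Defensive.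
Import GRing.Theory.
Local Open Scope ring_scope.

Section Aux.
Variables (K : fieldType) (n : nat).
Hypothesis charK0 : [pchar K] =i pred0.
Local Notation R := {mpoly K[n]}.

Lemma nat_ne0 k : (k.+1)%:R != 0 :> K.
Proof. by move/pcharf0P: charK0 => ->. Qed.

Lemma idealN (I : pred R) a : is_ideal I -> a \in I -> - a \in I.
Proof. by case=> _ _ hM ha; rewrite -mulN1r; apply: hM. Qed.

Lemma idealB (I : pred R) a b : is_ideal I -> a \in I -> b \in I -> a - b \in I.
Proof. move=> hI ha hb; case: (hI) => _ hD _; exact: hD _ _ ha (idealN hI hb). Qed.

Lemma idealMr (I : pred R) a r : is_ideal I -> a \in I -> a * r \in I.
Proof. by case=> _ _ hM ha; rewrite mulrC; apply: hM. Qed.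

Lemma ideal_cancel (I : pred R) k y : is_ideal I -> (k.+1)%:R * y \in I -> y \in I.
Proof.
case=> _ _ hM h.
have -> : y = (((k.+1)%:R : K)^-1)%:MP * ((k.+1)%:R * y).
  by rewrite mulrA -mpolyC_nat -mpolyCM mulVf ?nat_ne0 // mpolyC1 mul1r.
exact: hM.
Qed.

Lemma mderiv_exp (i : 'I_n) (x : R) k :
  mderiv i (x ^+ k.+1) = (k.+1)%:R * x ^+ k * mderiv i x.
Proof.
elim: k => [|k ih]; first by rewrite expr1 expr0 mulr1 mul1r.
rewrite exprS mderivM ih [in RHS]exprS -(addn1 k.+1) natrD.
rewrite exprS.
have E : forall y d c : {mpoly K[n]}, d * (x * y) + x * (c * y * d) = (c + 1) * (x * y) * d.
  by move=> y d c; ring.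
exact: E.
Qed.

Lemma deriv_rad (i : 'I_n) (I P : pred R) :
  is_ideal I -> radical_eq I P ->
  (forall f, f \in I -> mderiv i f \in I) ->
  forall f, f \in P -> mderiv i f \in P.
Proof.
move=> hI hrad hder f /hrad [k hk].
pose D := mderiv i f.
suff H : forall j, (j <= k)%N -> f ^+ (k - j) * D ^+ (2 * j) \in I.
  by apply/hrad; exists (2 * k)%N; move: (H k (leqnn k)); rewrite subnn expr0 mul1r.
elim=> [|j ih] hj; first by rewrite subn0 muln0 expr0 mulr1.
have hj' : (j <= k)%N by apply: ltnW.
have hA := hder _ (ih hj').
set a := f ^+ (k - j) * D ^+ (2 * j) in hA.
have e : (k - j = (k - j.+1).+1)%N by rewrite subnSK.
have hB : D * mderiv i a \in I by case: hI => _ _ hM; apply: hM.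
have hC : D * mderiv i a =
  (k - j.+1).+1%:R * (f ^+ (k - j.+1) * D ^+ (2 * j.+1))
  + ((2 * j)%:R * mderiv i D) * a.
  rewrite /a mderivM e mderiv_exp -/D.
  case: j {ih hj hj' hA hB e a} => [|j].
    rewrite muln0 expr0 -mpolyC1 mderivC mpolyC1 (_ : (2 * 1 = 2)%N) // expr2; ring.
  have e1 : (2 * j.+1 = (2 * j).+2)%N by rewrite mulnS.
  have e2 : (2 * j.+2 = (2 * j).+4)%N by rewrite !mulnS.
  rewrite e1 e2 mderiv_exp !exprS; ring.
apply: (ideal_cancel (k := (k - j.+1)%N) hI).
have hE : (2 * j)%:R * mderiv i D * a \in I by case: hI => _ _ hM; apply: hM; exact: ih hj'.
have := idealB hI hB hE.
by rewrite hC addrK.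
Qed.


Lemma iterD_in (i : 'I_n) (P : pred R) :
  (forall f, f \in P -> mderiv i f \in P) ->
  forall k f, f \in P -> f^`M(i, k) \in P.
Proof.
move=> hD k f hf; rewrite mderivn_iter; elim: k => //= k ih; exact: hD.
Qed.

Lemma prod_val (i : 'I_n) d (m0 : 'X_{1..n}) : m0 i = 0%N ->
  (\prod_(j < n) ((U_(i) *+ d + m0)%MM j)^_((U_(i) *+ d)%MM j))%N = d`!.
Proof.
move=> h0; rewrite (bigD1 i) //= big1 ?muln1.
  by rewrite mnmDE mulmnE mnm1E eqxx mul1n h0 addn0 ffactnn.
move=> j ne_ji; rewrite mnmDE mulmnE mnm1E eq_sym (negbTE ne_ji) mul0n ffactn0 //.
Qed.

Lemma main_ind (i : 'I_n) (P : pred R) :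
  is_ideal P -> (forall f, f \in P -> mderiv i f \in P) ->
  forall d f, f \in P -> (forall m : 'X_{1..n}, (d < m i)%N -> f@_m = 0) ->
  in_generated_ideal (fun q : R => q \in P /\ free_of_var i q) f.
Proof.
move=> hPi hD; elim=> [|d ih] f hfP hf.
  exists [:: (1, f)]; split.
    move=> x; rewrite inE => /eqP -> /=; split => // m.
    rewrite mcoeff_msupp => nz; apply/eqP; rewrite -leqn0 leqNgt; apply/negP => /hf.
    by move/eqP: nz.
  by rewrite big_cons big_nil mul1r addr0.
set M := (U_(i) *+ d.+1)%MM.
set h := f^`M[M].
have hhP : h \in P by exact: iterD_in.
have hfree : free_of_var i h.
  move=> m; rewrite mcoeff_msupp /h mcoeff_mderivm; apply: contraNeq => hm.
  rewrite hf ?mul0rn //.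
  rewrite mnmDE /M mulmnE mnm1E eqxx mul1n; lia.
set c := (((d.+1)`!)%:R : K)^-1.
set q := c%:MP * 'X_[M].
set g := f - q * h.
have hgP : g \in P.
  apply: idealB => //; case: hPi => _ _ hM; exact: hM.
have hg : forall m : 'X_{1..n}, (d < m i)%N -> g@_m = 0.
  move=> m hm.
  have hle : (M <= m)%MM.
    apply/mnm_lepP => j; rewrite /M mulmnE mnm1E; case: eqP => [<-|_]; lia.
  set m0 := (m - M)%MM.
  have em : m = (M + m0)%MM by rewrite addmC submK.
  have eq : q * h = (c%:MP * h) * 'X_[M] by rewrite /q; ring.
  rewrite /g mcoeffB eq em mcoeffMX mcoeffCM /h mcoeff_mderivm.
  have [z0|nz0] := eqVneq (m0 i) 0%N.
    rewrite prod_val // -mulr_natr mulrCA /c.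
    have hN : ((d.+1)`!)%:R != 0 :> K.
      by rewrite -(prednK (fact_gt0 d.+1)) nat_ne0.
    by rewrite mulVf // mulr1 subrr.
  rewrite hf ?mul0rn ?mulr0 ?subr0 //.
  rewrite mnmDE /M mulmnE mnm1E eqxx mul1n; lia.
have [s [hs es]] := ih g hgP hg.
exists ((q, h) :: s); split.
  move=> x; rewrite inE => /orP [/eqP -> //|]; exact: hs.
by rewrite big_cons /= -es /g addrC subrK.
Qed.

Lemma gen_in (P : pred R) (J : R -> Prop) :
  is_ideal P -> (forall q, J q -> q \in P) ->
  forall f, in_generated_ideal J f -> f \in P.
Proof.
move=> [h0 hD hM] hJ f [s [hs ->]].
elim: s hs => [|x s ihs] hs; first by rewrite big_nil.
rewrite big_cons; apply: hD.
  by apply: hM; apply: hJ; apply: hs; rewrite inE eqxx.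
by apply: ihs => y hy; apply: hs; rewrite inE hy orbT.
Qed.

End Aux.
Unset Implicit Arguments.

Theorem corollary7p3 (K : fieldType) (n : nat)
  (charK0 : [pchar K] =i pred0)
  (P I : pred {mpoly K[n.+1]})
  (hP : is_prime_ideal P) (hI : is_ideal I) (hrad : radical_eq I P)
  (hder : forall f, f \in I -> mderiv ord_max f \in I) :
  forall f, f \in P <->
    in_generated_ideal
      (fun q : {mpoly K[n.+1]} => q \in P /\ free_of_var ord_max q) f.
Proof.
case: hP => hPi _ _.
have hD := deriv_rad charK0 hI hrad hder.
move=> f; split; last by apply: gen_in => // q [].
move=> hf; apply: (main_ind charK0 hPi hD (d := msize f)) => // m hm.
apply: memN_msupp_eq0; apply/negP => /msize_mdeg_lt hlt.
have : (m ord_max <= mdeg m)%N by rewrite mdegE (bigD1 ord_max) //= leq_addr.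
lia.
Qed.
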